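(* Let $m>2$ be an integer and, in formal (or analytic) coordinates $(\theta,x_1,\dots,x_{2n})$ on $(\mathbb{K}^{2n+1},O)$, let $\alpha=d(\theta^m-x_1\theta)+\gamma$, where $\gamma=\sum_{i=1}^{2n}g_i(x)\,dx_i$ has coefficients independent of $\theta$ and $d\gamma$ is a symplectic form in the variables $x_1,\dots,x_{2n}$. Let $X=f_0\,\partial/\partial\theta+\sum_{i=1}^{2n}f_i\,\partial/\partial x_i$ be a formal (or analytic) vector field with $\mathcal{L}_X\alpha=0$. Then $f_0=f_1=0$.
   Context: $\mathbb{K}=\mathbb{R}$ or $\mathbb{C}$. *)

(* Defs.v *)
From HB Require Import structures.
From mathcomp Require Import all_boot all_order all_algebra.
Set Implicit Arguments. Unset Strict Implicit. Unset Printing Implicit Defensive.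
Import GRing.Theory.
Local Open Scope ring_scope.

Section FPS.
Variable K : fieldType.
Variable N : nat.

Definition mi := {ffun 'I_N -> nat}.
Definition fps := mi -> K.

Definition mi_add (a b : mi) : mi := [ffun i => (a i + b i)%N].
Definition mi_unit (i : 'I_N) : mi := [ffun j => nat_of_bool (j == i)].
Definition mi_zero : mi := [ffun _ => 0%N].

Definition fps_zero : fps := fun _ => 0.
Definition fps_add (s t : fps) : fps := fun a => s a + t a.
Definition fps_opp (s : fps) : fps := fun a => - s a.
Definition fps_mul (s t : fps) : fps := fun a =>
  \sum_(b : {ffun 'I_N -> 'I_(\sum_i a i).+1} | [forall i, (b i <= a i)%N])
     s [ffun i => nat_of_ord (b i)] * t [ffun i => (a i - b i)%N].
Definition fps_monomial (a : mi) : fps := fun b => (b == a)%:R.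
Definition fps_deriv (i : 'I_N) (s : fps) : fps :=
  fun a => (a i).+1%:R * s (mi_add a (mi_unit i)).
Definition fps_at0 (s : fps) : K := s mi_zero.

(* 1-forms  sum_j w_j dz_j  and vector fields  sum_k X_k d/dz_k *)
Definition oneform := 'I_N -> fps.
Definition vfield := 'I_N -> fps.

Definition fps_d (h : fps) : oneform := fun j => fps_deriv j h.

Definition lie_oneform (X : vfield) (w : oneform) : oneform := fun j => fun a =>
  \sum_k (fps_mul (X k) (fps_deriv k (w j)) a + fps_mul (w k) (fps_deriv j (X k)) a).
End FPS.

(* Coordinates (theta, x_1, ..., x_2n) on K^(2n+1): theta is index ord0,
   x_(i+1) is index lift ord0 i for i : 'I_(2n). *)
Section Setting.
Variable K : fieldType.
Variable n : nat.
Local Notation N := (2 * n).+1.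

Definition theta_idx : 'I_N := ord0.
Definition x_idx (i : 'I_(2 * n)) : 'I_N := lift ord0 i.
Definition x1_idx : 'I_N := inord 1.

Definition gamma_form (g : 'I_(2 * n) -> fps K N) : oneform K N :=
  fun j => match unlift ord0 j with Some i => g i | None => @fps_zero K N end.

Definition h_fun (m : nat) : fps K N :=
  fps_add (@fps_monomial K N [ffun i => (m * mi_unit theta_idx i)%N])
          (fps_opp (@fps_monomial K N (mi_add (mi_unit theta_idx) (mi_unit x1_idx)))).

Definition alpha_form (m : nat) (g : 'I_(2 * n) -> fps K N) : oneform K N :=
  fun j => fps_add (fps_d (h_fun m) j) (gamma_form g j).

Definition dgamma_at0 (g : 'I_(2 * n) -> fps K N) : 'M[K]_(2 * n) :=
  \matrix_(i, j) fps_at0 (fps_add (fps_deriv (x_idx i) (g j))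
                                  (fps_opp (fps_deriv (x_idx j) (g i)))).

(* d gamma is a (formal) symplectic form in x: nondegenerate at the origin *)
Definition symplectic_dgamma (g : 'I_(2 * n) -> fps K N) : Prop :=
  \det (dgamma_at0 g) != 0.

Definition indep_theta (s : fps K N) : Prop :=
  forall a : mi N, a theta_idx != 0%N -> s a = 0.
End Setting.

(* Main.v *)
Require Import Defs.
From HB Require Import structures.
From mathcomp Require Import all_boot all_order all_algebra.
From mathcomp Require Import ring zify.
From Stdlib Require Import FunctionalExtensionality.
Set Implicit Arguments. Unset Strict Implicit. Unset Printing Implicit Defensive.
Import GRing.Theory Num.Theory.
Local Open Scope ring_scope.

Ltac blia := repeat match goal with |- context [nat_of_bool (?x == ?y)] => case: (x == y) end; simpl; lia.

Section Infra.
Variable K : fieldType.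
Variable N : nat.
Local Notation mi := (mi N).
Local Notation fps := (fps K N).

Definition lemi (a b : mi) : bool := [forall i, (a i <= b i)%N].
Definition mi_sub (a b : mi) : mi := [ffun i => (a i - b i)%N].
Definition degm (a : mi) : nat := (\sum_i a i)%N.
Definition mval M (b : {ffun 'I_N -> 'I_M}) : mi := [ffun i => nat_of_ord (b i)].
Definition enum_le (a : mi) : seq mi :=
  [seq mval b | b <- enum [pred b : {ffun 'I_N -> 'I_(degm a).+1} | lemi (mval b) a]].

Lemma mval_inj M : injective (@mval M).
Proof. by move=> b c E; apply/ffunP=> i; apply/val_inj; have := congr1 (fun f : mi => f i) E; rewrite !ffunE. Qed.

Lemma le_degm (a : mi) i : (a i <= degm a)%N.
Proof. by rewrite /degm (bigD1 i) //= leq_addr. Qed.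

Lemma uniq_enum_le a : uniq (enum_le a).
Proof. by rewrite map_inj_uniq ?enum_uniq //; apply: mval_inj. Qed.

Lemma mem_enum_le a c : (c \in enum_le a) = lemi c a.
Proof.
apply/mapP/idP.
  by case=> b; rewrite mem_enum => /= H ->.
move=> H; exists [ffun i => inord (c i) : 'I_(degm a).+1].
  rewrite mem_enum /= /lemi; apply/forallP=> i; rewrite !ffunE inordK.
    by move/forallP: H.
  by rewrite ltnS (leq_trans _ (le_degm a i)) //; move/forallP: H.
apply/ffunP=> i; rewrite !ffunE inordK //.
by rewrite ltnS (leq_trans _ (le_degm a i)) //; move/forallP: H.
Qed.

Lemma mul_sumE (s t : fps) a :
  fps_mul s t a = \sum_(c <- enum_le a) s c * t (mi_sub a c).
Proof.
rewrite /fps_mul /enum_le big_map big_enum /=.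
apply: eq_big => [b|b _].
  by rewrite inE /lemi; apply: eq_forallb => i; rewrite ffunE.
congr (_ * _); congr t; apply/ffunP=> i; by rewrite !ffunE.
Qed.

Lemma sum_le_perm (a : mi) (l : seq mi) (P : pred mi) (F : mi -> K) :
  uniq l -> (forall c, (c \in l) = lemi c a && P c) ->
  \sum_(c <- l) F c = \sum_(c <- enum_le a | P c) F c.
Proof.
move=> ul ml; rewrite -[RHS]big_filter; apply: perm_big; apply: uniq_perm => //.
  by rewrite filter_uniq // uniq_enum_le.
by move=> c; rewrite mem_filter ml mem_enum_le andbC.
Qed.


Lemma sum_le_perm0 (a : mi) (l : seq mi) (F : mi -> K) :
  uniq l -> (forall c, (c \in l) = lemi c a) ->
  \sum_(c <- l) F c = \sum_(c <- enum_le a) F c.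
Proof.
move=> ul ml; apply: perm_big; apply: uniq_perm => //; first exact: uniq_enum_le.
by move=> c; rewrite ml mem_enum_le.
Qed.

Lemma lemi_refl a : lemi a a.
Proof. by apply/forallP. Qed.

Lemma lemi_sub a c : lemi (mi_sub a c) a.
Proof. by apply/forallP=> i; rewrite ffunE leq_subr. Qed.

Lemma mi_subK a c : lemi c a -> mi_sub a (mi_sub a c) = c.
Proof. by move/forallP=> H; apply/ffunP=> i; rewrite !ffunE subKn. Qed.

Lemma mi_subnn a : mi_sub a a = mi_zero N.
Proof. by apply/ffunP=> i; rewrite !ffunE subnn. Qed.

Lemma mulC (s t : fps) a : fps_mul s t a = fps_mul t s a.
Proof.
rewrite !mul_sumE -(@sum_le_perm0 a (map (mi_sub a) (enum_le a))).
- rewrite big_map big_seq [RHS]big_seq; apply: eq_bigr => c.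
  by rewrite mem_enum_le => H; rewrite mi_subK // mulrC.
- rewrite map_inj_in_uniq ?uniq_enum_le // => c d.
  rewrite !mem_enum_le => Hc Hd E.
  by rewrite -(mi_subK Hc) E mi_subK.
- move=> c; apply/mapP/idP => [[d _ ->]|H]; first exact: lemi_sub.
  by exists (mi_sub a c); rewrite ?mem_enum_le ?lemi_sub ?mi_subK.
Qed.

Lemma mul_delta_l (s : fps) c0 a :
  fps_mul (fun c => (c == c0)%:R) s a = if lemi c0 a then s (mi_sub a c0) else 0.
Proof.
rewrite mul_sumE; case: ifP => H.
  rewrite (bigD1_seq c0) ?mem_enum_le ?uniq_enum_le //= eqxx mul1r big1 ?addr0 //.
  by move=> c /negbTE ->; rewrite mul0r.
rewrite big_seq big1 // => c; rewrite mem_enum_le => Hc.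
by case: eqP Hc H => [->->|]; rewrite ?mul0r.
Qed.

Lemma mul_delta_r (s : fps) c0 a :
  fps_mul s (fun c => (c == c0)%:R) a = if lemi c0 a then s (mi_sub a c0) else 0.
Proof. by rewrite mulC mul_delta_l. Qed.

Lemma mul_low (s t : fps) a :
  (forall b, lemi b a -> b != a -> s b * t (mi_sub a b) = 0) ->
  fps_mul s t a = s a * t (mi_zero N).
Proof.
move=> H; rewrite mul_sumE (bigD1_seq a) ?mem_enum_le ?lemi_refl ?uniq_enum_le //=.
rewrite mi_subnn big_seq_cond big1 ?addr0 // => b /andP[].
by rewrite mem_enum_le; apply: H.
Qed.

Lemma mul0 (s t : fps) a :
  (forall b, lemi b a -> s b * t (mi_sub a b) = 0) -> fps_mul s t a = 0.
Proof. by move=> H; rewrite mul_sumE big_seq big1 // => b; rewrite mem_enum_le; apply: H. Qed.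

Lemma mulBr (s t u : fps) a :
  fps_mul s (fun c => t c - u c) a = fps_mul s t a - fps_mul s u a.
Proof. by rewrite !mul_sumE -sumrB; apply: eq_bigr => c _; rewrite mulrBr. Qed.

Lemma mulDr (s t u : fps) a :
  fps_mul s (fun c => t c + u c) a = fps_mul s t a + fps_mul s u a.
Proof. by rewrite !mul_sumE -big_split; apply: eq_bigr => c _; rewrite mulrDr. Qed.

Lemma mulZr (s t : fps) k a :
  fps_mul s (fun c => k * t c) a = k * fps_mul s t a.
Proof. by rewrite !mul_sumE mulr_sumr; apply: eq_bigr => c _; rewrite mulrCA. Qed.

Lemma mulNr (s t : fps) a :
  fps_mul s (fun c => - t c) a = - fps_mul s t a.
Proof. by rewrite !mul_sumE -sumrN; apply: eq_bigr => c _; rewrite mulrN. Qed.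

Lemma mul_ext (s s' t t' : fps) a : (forall c, s c = s' c) -> (forall c, t c = t' c) ->
  fps_mul s t a = fps_mul s' t' a.
Proof. by move=> Hs Ht; rewrite !mul_sumE; apply: eq_bigr => c _; rewrite Hs Ht. Qed.

Lemma leibniz (s t : fps) i a :
  fps_deriv i (fps_mul s t) a = fps_mul (fps_deriv i s) t a + fps_mul s (fps_deriv i t) a.
Proof.
set a' := mi_add a (mi_unit i).
pose G (c : mi) := (c i)%:R * (s c * t (mi_sub a' c)).
pose G2 (c : mi) := (a' i - c i)%:R * (s c * t (mi_sub a' c)).
have T1 : fps_mul (fps_deriv i s) t a = \sum_(c <- enum_le a') G c.
  rewrite mul_sumE.
  transitivity (\sum_(c <- map (fun b => mi_add b (mi_unit i)) (enum_le a)) G c).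
    rewrite [RHS]big_map; apply: eq_bigr => b _ /=; rewrite /G /fps_deriv mulrA; congr (_ * _ * _).
      by rewrite !ffunE eqxx addn1.
    congr t; apply/ffunP=> j; rewrite !ffunE; blia.
  rewrite (@sum_le_perm a' _ (fun c => 0 < c i)%N).
  - rewrite big_mkcond; apply: eq_bigr => c _; case: ifP => // H.
    by move: H; rewrite lt0n /G => /negbFE/eqP ->; rewrite mul0r.
  - rewrite map_inj_uniq ?uniq_enum_le // => b c E; apply/ffunP=> j.
    by have := congr1 (fun f : mi => f j) E; rewrite !ffunE; blia.
  move=> c; apply/mapP/idP => [[b]|/andP[H1 H2]].
    rewrite mem_enum_le => /forallP H ->; rewrite !ffunE eqxx addn1 andbT.
    by apply/forallP => j; have := H j; rewrite !ffunE; blia.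
  exists (mi_sub c (mi_unit i)).
    rewrite mem_enum_le; apply/forallP=> j; move/forallP: H1 => /(_ j).
    by rewrite !ffunE; case: (j == i) => /=; blia.
  by apply/ffunP=> j; rewrite !ffunE; case: eqP => [->|] /=; blia.
have T2 : fps_mul s (fps_deriv i t) a = \sum_(c <- enum_le a') G2 c.
  rewrite mul_sumE big_seq.
  transitivity (\sum_(c <- enum_le a) G2 c).
    rewrite [RHS]big_seq; apply: eq_bigr => b; rewrite mem_enum_le => /forallP H.
    rewrite /G2 /fps_deriv mulrCA; congr (_ * (_ * _)).
      by rewrite !ffunE eqxx; have := H i; move=> Hi; rewrite /= addn1 subSn.
    congr t; apply/ffunP=> j; have := H j; rewrite !ffunE; blia.
  rewrite (@sum_le_perm a' _ (fun c => c i <= a i)%N).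
  - rewrite big_mkcond; apply: eq_big_seq => c; rewrite mem_enum_le => /forallP /(_ i) H1.
    case: ifP => // H2.
    rewrite /G2 (_ : (a' i - c i)%N = 0%N) ?mul0r //.
    by move: H1 H2; rewrite !ffunE eqxx; blia.
  - exact: uniq_enum_le.
  move=> c; rewrite mem_enum_le; apply/idP/idP => [/forallP H|/andP[/forallP H1 H2]].
    rewrite (H i) andbT; apply/forallP => j; have := H j; rewrite !ffunE; blia.
  apply/forallP=> j; have := H1 j; rewrite !ffunE; case: eqP => [->|] /=; blia.
rewrite T1 T2 -big_split /= /fps_deriv mul_sumE mulr_sumr big_seq [RHS]big_seq.
apply: eq_bigr => c; rewrite mem_enum_le => /forallP /(_ i).
rewrite /G /G2 -mulrDl -natrD !ffunE eqxx => H; congr (_%:R * _); blia.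
Qed.

Lemma deriv_comm (s : fps) i j a :
  fps_deriv i (fps_deriv j s) a = fps_deriv j (fps_deriv i s) a.
Proof.
rewrite /fps_deriv !ffunE; case: (eqVneq i j) => [->//|ne].
have ne' : (j == i) = false by rewrite eq_sym (negbTE ne).
rewrite !addn0 mulrCA; congr (_ * (_ * _)).
congr s; apply/ffunP=> k; rewrite !ffunE; blia.
Qed.

Lemma degm_lt a b : lemi b a -> b != a -> (degm b < degm a)%N.
Proof.
move=> /forallP H ne.
case: (pickP (fun i => b i != a i)) => [i Hi|Hall]; last first.
  by case/eqP: ne; apply/ffunP=> i; have := Hall i => /= /negbFE/eqP.
rewrite /degm (bigD1 i) //= [X in (_ < X)%N](bigD1 i) //=.
have Hs : (\sum_(j | j != i) b j <= \sum_(j | j != i) a j)%N by apply: leq_sum => j _; apply: H.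
by rewrite -addSn; apply: leq_add => //; rewrite ltn_neqAle Hi H.
Qed.
End Infra.

Section Main.
Variable K : numFieldType.
Variable n : nat.
Local Notation N := (2 * n).+1.
Local Notation mi := (mi N).
Local Notation fps := (fps K N).
Local Notation th := (theta_idx n).
Variable g : 'I_(2 * n) -> fps.
Hypothesis hg : forall i, indep_theta (g i).

Lemma natS_neq0 k : (k.+1)%:R != 0 :> K.
Proof. by rewrite pnatr_eq0. Qed.

Lemma gamma_th : gamma_form g th = @fps_zero K N.
Proof. by rewrite /gamma_form unlift_none. Qed.

Lemma gamma_x i : gamma_form g (x_idx i) = g i.
Proof. by rewrite /gamma_form /x_idx liftK. Qed.

Lemma indep_gamma k : indep_theta (gamma_form g k).
Proof. by rewrite /gamma_form; case: unliftP => [i _|_] //; apply: hg. Qed.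

Lemma indep_deriv (s : fps) k : indep_theta s -> indep_theta (fps_deriv k s).
Proof.
move=> H a Ha; rewrite /fps_deriv H ?mulr0 // ffunE; move: Ha; blia.
Qed.

Lemma deriv_th_indep (s : fps) a : indep_theta s -> fps_deriv th s a = 0.
Proof. by move=> H; rewrite /fps_deriv H ?mulr0 // !ffunE eqxx addn1. Qed.

Lemma alE m j c : alpha_form m g j c = fps_deriv j (@h_fun K n m) c + gamma_form g j c.
Proof. by []. Qed.

Definition W m k j c := fps_deriv k (alpha_form m g j) c - fps_deriv j (alpha_form m g k) c.

Lemma WE m k j c : W m k j c = fps_deriv k (gamma_form g j) c - fps_deriv j (gamma_form g k) c.
Proof.
rewrite /W /fps_deriv !alE !mulrDr.
have := deriv_comm (@h_fun K n m) k j c; rewrite /fps_deriv => ->.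
ring.
Qed.

Lemma indep_W m k j : indep_theta (W m k j).
Proof.
move=> a Ha; rewrite WE !(indep_deriv _ (indep_gamma _)) // subrr //.
Qed.

Lemma W_th m k c : W m k th c = 0.
Proof.
rewrite WE deriv_th_indep; last exact: indep_gamma.
by rewrite /fps_deriv /gamma_form unlift_none /fps_zero mulr0 subrr.
Qed.

Lemma W_th' m k c : W m th k c = 0.
Proof.
rewrite WE deriv_th_indep; last exact: indep_gamma.
by rewrite /fps_deriv /gamma_form unlift_none /fps_zero mulr0 subr0.
Qed.

End Main.

Section HFun.
Variable K : numFieldType.
Variable n : nat.
Hypothesis hn : (0 < n)%N.
Local Notation N := (2 * n).+1.
Local Notation mi := (mi N).
Local Notation fps := (fps K N).
Local Notation th := (theta_idx n).
Local Notation x1 := (x1_idx n).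

Lemma x1_neq : x1 != th.
Proof.
apply/eqP => E; have := congr1 val E; rewrite /= inordK //; lia.
Qed.

Definition cm m : mi := [ffun i => ((m - 1) * mi_unit th i)%N].

Lemma dh_th m c : (1 < m)%N -> fps_deriv th (@h_fun K n m) c =
  m%:R * (c == cm m)%:R - (c == mi_unit x1)%:R.
Proof.
move=> hm; have nx := x1_neq; have nx' : (th == x1) = false by rewrite eq_sym (negbTE nx).
rewrite /fps_deriv /h_fun /fps_add /fps_opp /fps_monomial.
have E1 : (mi_add c (mi_unit th) == [ffun i => (m * mi_unit th i)%N]) = (c == cm m).
  apply/eqP/eqP => [E|->]; apply/ffunP => i; [have := congr1 (fun f : mi => f i) E|];
  rewrite !ffunE; blia.
have E2 : (mi_add c (mi_unit th) == mi_add (mi_unit th) (mi_unit x1)) = (c == mi_unit x1).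
  apply/eqP/eqP => [E|->]; apply/ffunP => i; [have := congr1 (fun f : mi => f i) E|];
  rewrite !ffunE; blia.
rewrite E1 E2; case: (eqVneq c (cm m)) => [->|n1].
  have -> : (cm m == mi_unit x1) = false.
    apply/eqP => E; have := congr1 (fun f : mi => f th) E; rewrite !ffunE eqxx nx'; lia.
  by rewrite !ffunE eqxx /= subr0 !mulr1 muln1 subr0 subn1 prednK //; lia.
case: (eqVneq c (mi_unit x1)) => [->|n2] /=.
  by rewrite !ffunE nx' /= mulr0 mul1r !add0r.
by rewrite subrr !mulr0 subrr.
Qed.

Lemma dh_x m j c : j != th -> fps_deriv j (@h_fun K n m) c =
  - ((j == x1) && (c == mi_unit th))%:R.
Proof.
move=> hj; have hj' : (th == j) = false by rewrite eq_sym (negbTE hj).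
rewrite /fps_deriv /h_fun /fps_add /fps_opp /fps_monomial.
have -> : (mi_add c (mi_unit j) == [ffun i => (m * mi_unit th i)%N]) = false.
  apply/eqP => E; have := congr1 (fun f : mi => f j) E; rewrite !ffunE eqxx (negbTE hj); lia.
have -> : (mi_add c (mi_unit j) == mi_add (mi_unit th) (mi_unit x1)) =
    (j == x1) && (c == mi_unit th).
  case: (eqVneq j x1) => [->|nj] /=.
    apply/eqP/eqP => [E|->]; apply/ffunP => i; [have := congr1 (fun f : mi => f i) E|];
    rewrite !ffunE; blia.
  apply/eqP => E; have := congr1 (fun f : mi => f j) E; rewrite !ffunE eqxx (negbTE hj) (negbTE nj); lia.
case: andP => [[_ /eqP ->]|_] /=.
  by rewrite !ffunE (negbTE hj) /= add0r mul1r.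
by rewrite subrr mulr0 oppr0.
Qed.

Lemma mul_indep0 (s t : fps) (a : mi) : indep_theta s ->
  (forall c : mi, (a th <= c th)%N -> t c = 0) -> (0 < a th)%N -> fps_mul s t a = 0.
Proof.
move=> hs ht ha; apply: mul0 => b _.
case: (eqVneq (b th) 0%N) => hb; last by rewrite hs ?mul0r.
by rewrite ht ?mulr0 // ffunE hb subn0.
Qed.

End HFun.

Theorem lemma5p9 (K : numFieldType) (n m : nat) (hn : (0 < n)%N) (hm : (2 < m)%N)
  (g : 'I_(2 * n) -> fps K (2 * n).+1)
  (hg : forall i, indep_theta (g i))
  (hsymp : symplectic_dgamma g)
  (f : vfield K (2 * n).+1)
  (hL : lie_oneform f (alpha_form m g) = fun _ => @fps_zero K (2 * n).+1) :
  f (theta_idx n) = @fps_zero K (2 * n).+1 /\ f (x1_idx n) = @fps_zero K (2 * n).+1.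
Proof.
set al := alpha_form m g.
set th := theta_idx n.
have hE : forall j a, \sum_k (fps_mul (f k) (fps_deriv k (al j)) a +
    fps_mul (al k) (fps_deriv j (f k)) a) = 0.
  by move=> j a; have := congr1 (fun F => F j a) hL.
pose H : fps K (2 * n).+1 := fun a => \sum_k fps_mul (f k) (al k) a.
have hA : forall j a, fps_deriv j H a + \sum_k fps_mul (f k) (W g m k j) a = 0.
  move=> j a; rewrite -[RHS](hE j a).
  have -> : fps_deriv j H a = \sum_k fps_deriv j (fps_mul (f k) (al k)) a.
    by rewrite /fps_deriv /H mulr_sumr.
  rewrite -big_split /=; apply: eq_bigr => k _.
  rewrite leibniz (mulC (al k)) /W mulBr; ring.
have hHth : forall a, fps_deriv th H a = 0.
  move=> a; have := hA th a; rewrite big1 ?addr0 // => k _.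
  by apply: mul0 => b _; rewrite (W_th hg) mulr0.
have hHind : indep_theta H.
  move=> a Ha; have := hHth (mi_sub a (mi_unit th)); rewrite /fps_deriv.
  have -> : mi_add (mi_sub a (mi_unit th)) (mi_unit th) = a.
    apply/ffunP=> i; rewrite !ffunE; case: (eqVneq i th) => [->|ne]; rewrite ?eqxx ?(negbTE ne) /=; move: Ha; rewrite -/th; lia.
  by move/eqP; rewrite mulf_eq0 (negbTE (natS_neq0 _ _)) /= => /eqP.
have hB : forall i (a : mi (2 * n).+1), a th != 0%N -> f (x_idx i) a = 0.
  suff S : forall d (a : mi (2 * n).+1), degm a = d -> a th != 0%N -> forall i, f (x_idx i) a = 0.
    by move=> i a Ha; exact: S _ a erefl Ha i.
  elim/ltn_ind => d IH a Hd Ha.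
  have key : forall j, \sum_(i < 2 * n) f (x_idx i) a * W g m (x_idx i) (x_idx j) (mi_zero _) = 0.
    move=> j; have := hA (x_idx j) a.
    rewrite {1}/fps_deriv hHind; last by rewrite ffunE; move: Ha; rewrite /th; lia.
    rewrite mulr0 add0r big_ord_recl.
    rewrite (@mul0 _ _ (f ord0)) ?add0r; last by move=> b _; rewrite (W_th' hg) mulr0.
    move=> E; rewrite -[RHS]E; apply: eq_bigr => i _; symmetry; apply: mul_low => b Hb Hne.
    case: (eqVneq (b th) 0%N) => Hb0.
      rewrite (indep_W hg) ?mulr0 //.
      by rewrite ffunE Hb0 subn0.
    rewrite (IH (degm b)) ?mul0r //.
    by rewrite -Hd; apply: degm_lt.
  have Mu : dgamma_at0 g \in unitmx by rewrite unitmxE unitfE.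
  set v := \row_(i < 2 * n) f (x_idx i) a.
  have hv : v *m dgamma_at0 g = 0.
    apply/rowP => j; rewrite !mxE -[RHS](key j); apply: eq_bigr => i _.
    by rewrite !mxE WE !gamma_x /fps_at0 /fps_add /fps_opp.
  have v0 : v = 0 by rewrite -(mulmxK Mu v) hv mul0mx.
  by move=> i; have := congr1 (fun M : 'rV[K]_(2 * n) => M 0 i) v0; rewrite !mxE.
have hm1 : (1 < m)%N by lia.
have neqx : forall i, x_idx i != th by move=> i; rewrite eq_sym; apply: neq_lift.
have indx : forall i, indep_theta (f (x_idx i)) by move=> i b hb; apply: hB.
have hx : forall i (a : mi (2 * n).+1), (0 < a th)%N ->
    fps_mul (f (x_idx i)) (al (x_idx i)) a =
    fps_mul (f (x_idx i)) (fun c => fps_deriv (x_idx i) (@h_fun K n m) c) a.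
  move=> i a ha.
  rewrite (@mul_ext _ _ _ (f (x_idx i)) _ (fun c => fps_deriv (x_idx i) (@h_fun K n m) c + g i c)) //; last first.
    by move=> c; rewrite /al alE gamma_x.
  rewrite mulDr (@mul_indep0 _ _ _ (g i) a) ?addr0 //.
  by move=> c hc; apply: hg; move: ha hc; rewrite /th; lia.
have hf0 : forall c, f th c = 0.
  suff S : forall k (c : mi (2 * n).+1), c (x1_idx n) = k -> f th c = 0.
    by move=> c; exact: S _ c erefl.
  elim/ltn_ind => k IH c Hc.
  set a := mi_add c (cm n m).
  have Ha : (1 < a th)%N by rewrite /a /cm !ffunE eqxx /th; lia.
  have := hHind a; rewrite -lt0n (ltnW Ha) => /(_ isT).
  rewrite /H big_ord_recl big1 ?addr0; last first.
    move=> i _; rewrite hx; last by lia.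
    apply: mul_indep0 => //; last by move: Ha; rewrite /th; lia.
    move=> c' hc'; rewrite (@dh_x K n hn) //.
    case: (c' =P mi_unit th) => [E|_]; last by rewrite andbF oppr0.
    by move: hc' Ha; rewrite E !ffunE /th eqxx => h1 h2; exfalso; lia.
  rewrite (@mul_ext _ _ _ (f ord0) _ (fun c' => m%:R * (c' == cm n m)%:R - (c' == mi_unit (x1_idx n))%:R)) //; last first.
    by move=> c'; rewrite /al alE gamma_th (@dh_th K n hn) // /fps_zero addr0.
  rewrite mulBr mulZr !mul_delta_r.
  have hx1 : (x1_idx n == th) = false by apply/negbTE; apply: x1_neq.
  have hl1 : lemi (cm n m) a by apply/forallP => i; rewrite !ffunE leq_addl.
  have hs1 : mi_sub a (cm n m) = c by apply/ffunP => i; rewrite !ffunE addnK.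
  rewrite hl1 hs1.
  have fin : m%:R * f th c = 0 -> f th c = 0.
    by move/eqP; rewrite mulf_eq0 pnatr_eq0 => /orP[/eqP m0|/eqP //]; lia.
  case: (posnP k) => [k0|kpos].
    have -> : lemi (mi_unit (x1_idx n)) a = false.
      apply/negbTE/negP => /forallP /(_ (x1_idx n)); rewrite !ffunE eqxx hx1; lia.
    by rewrite subr0.
  have -> : lemi (mi_unit (x1_idx n)) a.
    apply/forallP => i; rewrite !ffunE; case: (eqVneq i (x1_idx n)) => [->|ne] /=; rewrite ?hx1; lia.
  rewrite (IH k.-1 _ (mi_sub a (mi_unit (x1_idx n)))) ?subr0 //; first lia.
  by rewrite !ffunE eqxx hx1 /= -Hc; lia.
have h2n : (0 < 2 * n)%N by lia.
pose i1 : 'I_(2 * n) := Ordinal h2n.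
have Ex1 : x1_idx n = x_idx i1.
  by apply: val_inj; rewrite /= inordK //; lia.
have hf1 : forall c, f (x1_idx n) c = 0.
  move=> c; case: (eqVneq (c th) 0%N) => Hc; last by rewrite Ex1; apply: hB.
  set a := mi_add c (mi_unit th).
  have Ha : a th = 1%N by rewrite !ffunE eqxx Hc.
  have := hHind a; rewrite Ha => /(_ isT).
  rewrite /H big_ord_recl (@mul0 _ _ (f ord0)) ?add0r; last by move=> b _; rewrite hf0 mul0r.
  rewrite (bigD1 i1) //= big1 ?addr0; last first.
    move=> i ne; rewrite hx ?Ha //; apply: mul0 => b _; rewrite (@dh_x K n hn) //.
    by rewrite Ex1 (inj_eq (@lift_inj _ ord0)) (negbTE ne) /= oppr0 mulr0.
  rewrite hx ?Ha // (@mul_ext _ _ _ (f (x_idx i1)) _ (fun c' => - (c' == mi_unit th)%:R)) //; last first.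
    by move=> c'; rewrite (@dh_x K n hn) // Ex1 eqxx.
  rewrite mulNr mul_delta_r.
  have -> : lemi (mi_unit th) a by apply/forallP=> i; rewrite !ffunE leq_addl.
  have -> : mi_sub a (mi_unit th) = c by apply/ffunP => i; rewrite !ffunE addnK.
  by rewrite -Ex1 => /eqP; rewrite oppr_eq0 => /eqP.
split; apply: functional_extensionality => c; [exact: hf0 | exact: hf1].
Qed.
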